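(* Consider a system with a finite set $S$ of tasks, periods $\tau_X$, frame length $T=\mathrm{lcm}\{\tau_X : X\in S\}$, per-execution rewards $r^1_X\ge r^2_X\ge\dots\ge r^{\tau_X}_X\ge 0$ and minimum average reward requirements $q^*_X>0$ (as described in the context). The system is feasible only if there exist real numbers $\{f^i_X : X\in S,\ 1\le i\le \tau_X\}$ such that (1) $q^*_X\le \sum_{i=1}^{\tau_X} f^i_X r^i_X$ for all $X\in S$; (2) $0\le f^i_X\le T/\tau_X$ for all $X\in S$ and $1\le i\le\tau_X$; (3) $\sum_{X\in S}\sum_{i=1}^{\tau_X} f^i_X\le T$.
   Context: A system consists of a finite set $S$ of tasks. Time is slotted, $t\in\{0,1,2,\dots\}$. Each task $X\in S$ has a period $\tau_X$ (a positive integer); time is partitioned into consecutive periods of $X$ of $\tau_X$ slots each, the first starting at $t=0$. In each period, task $X$ has one job, which is removed from the system at the end of that period. Let $T$ be the least common multiple of $\{\tau_X : X\in S\}$; time is partitioned into consecutive frames of $T$ slots each, the first starting at $t=0$, so each frame contains $T/\tau_X$ periods of $X$. A scheduling policy (possibly randomized, possibly history dependent) chooses in each time slot either to idle or to execute the job of exactly one task; a job may be executed in any number of slots within its period. Each task $X$ has rewards $r^1_X\ge r^2_X\ge\dots\ge r^{\tau_X}_X\ge 0$: when the job of $X$ is executed for the $i$-th time within a period, $X$ obtains reward $r^i_X$. Let $s_X(t)$ be the total reward obtained by $X$ between time $0$ and time $t$; the average reward of $X$ is $q_X=\liminf_{t\to\infty} s_X(t)/(t/T)$. Each task has a minimum average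 reward requirement $q^*_X>0$. A policy fulfills the system if under it $q_X\ge q^*_X$ with probability 1 for all $X\in S$. The system is feasible if some scheduling policy fulfills it. *)

(* Defs.v *)
From HB Require Import structures.
From mathcomp Require Import all_boot all_order all_algebra.
From mathcomp Require Import all_classical all_reals all_analysis.
Set Implicit Arguments. Unset Strict Implicit. Unset Printing Implicit Defensive.
Import Order.TTheory GRing.Theory Num.Theory.
Local Open Scope ring_scope.

(* A schedule: in slot t, [sched t = None] means idle, [Some X] means the job
   of task X (of its current period) is executed. *)

Definition frame_len (S : finType) (tau : S -> nat) : nat :=
  \big[lcmn/1%N]_(X : S) tau X.

(* Number of slots u' of the current period of X containing slot u with
   u' <= u in which X is executed: if X is executed at u, this is i such that
   this is the i-th execution of X's job within its period. *)
Definition exec_index (S : finType) (tau : S -> nat) (sched : nat -> option S)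
    (X : S) (u : nat) : nat :=
  (\sum_((u %/ tau X) * tau X <= v < u.+1) (sched v == Some X))%N.

Definition slot_reward (R : realType) (S : finType) (tau : S -> nat)
    (r : S -> nat -> R) (sched : nat -> option S) (X : S) (u : nat) : R :=
  if sched u == Some X then r X (exec_index tau sched X u) else 0.

Definition total_reward (R : realType) (S : finType) (tau : S -> nat)
    (r : S -> nat -> R) (sched : nat -> option S) (X : S) (t : nat) : R :=
  \sum_(u < t) slot_reward tau r sched X u.

Definition avg_reward (R : realType) (S : finType) (tau : S -> nat)
    (r : S -> nat -> R) (sched : nat -> option S) (X : S) : \bar R :=
  limn_einf (fun t : nat =>
    ((total_reward tau r sched X t) / (t%:R / (frame_len tau)%:R))%:E).

(* A (realisation of a possibly randomized, history dependent) policy is a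
   random schedule on some probability space; it fulfills the system if
   q_X >= q*_X for all X, almost surely. *)
Definition fulfills (R : realType) (S : finType) (tau : S -> nat)
    (r : S -> nat -> R) (qstar : S -> R)
    (d : measure_display) (Omega : measurableType d)
    (P : probability Omega R) (sched : Omega -> nat -> option S) : Prop :=
  {ae P, forall w, forall X : S, ((qstar X)%:E <= avg_reward tau r (sched w) X)%E}.

Definition feasible (R : realType) (S : finType) (tau : S -> nat)
    (r : S -> nat -> R) (qstar : S -> R) : Prop :=
  exists (d : measure_display) (Omega : measurableType d)
         (P : probability Omega R) (sched : Omega -> nat -> option S),
    fulfills tau r qstar P sched.

(* Main.v *)
Require Import Defs.
From HB Require Import structures.
From mathcomp Require Import all_boot all_order all_algebra.
From mathcomp Require Import all_classical all_reals all_analysis.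
From mathcomp Require Import lra.
Import Order.TTheory GRing.Theory Num.Theory.
Import numFieldNormedType.Exports.
Local Open Scope ring_scope.

Lemma sumn_onehot (x lo hi : nat) (F : nat -> nat) : (lo <= x < hi)%N ->
  (\sum_(lo <= i < hi) ((x == i) * F i))%N = F x.
Proof.
move=> hx; rewrite (bigD1_seq x) //= ?mem_index_iota ?iota_uniq // eqxx mul1n.
by rewrite big1 ?addn0 // => i; rewrite eq_sym => /negbTE ->.
Qed.

Lemma sumr_onehot (R : realType) (x lo hi : nat) (F : nat -> R) : (lo <= x < hi)%N ->
  \sum_(lo <= i < hi) ((x == i)%:R * F i) = F x.
Proof.
move=> hx; rewrite (bigD1_seq x) //= ?mem_index_iota ?iota_uniq // eqxx mul1r.
by rewrite big1 ?addr0 // => i; rewrite eq_sym => /negbTE ->; rewrite mul0r.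
Qed.

Section Comb.
Variables (S : finType) (tau : S -> nat) (sched : nat -> option S).
Hypothesis tau_pos : forall X, (0 < tau X)%N.

Lemma idx_bounds X u : sched u = Some X ->
  (1 <= exec_index tau sched X u <= tau X)%N.
Proof.
move=> su; rewrite /exec_index.
have au : (u %/ tau X * tau X <= u)%N by rewrite leq_divM.
rewrite big_nat_recr //= su eqxx addn1 ltnS /=.
have hle : (\sum_(u %/ tau X * tau X <= i < u) (sched i == Some X) <=
   \sum_(u %/ tau X * tau X <= i < u) 1)%N by apply: leq_sum => i _; exact: leq_b1.
apply: (leq_ltn_trans hle).
rewrite sum_nat_const_nat muln1.
rewrite {1}(divn_eq u (tau X)) addKn.
by rewrite ltn_pmod.
Qed.

Lemma idx_mono X u u' : sched u' = Some X -> (u < u')%N ->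
  (u %/ tau X = u' %/ tau X)%N ->
  (exec_index tau sched X u < exec_index tau sched X u')%N.
Proof.
move=> su' uu' he; rewrite /exec_index -he.
have au : (u %/ tau X * tau X <= u)%N by rewrite leq_divM.
rewrite (@big_cat_nat _ _ _ u.+1 _ u'.+1) //=.
all: try (apply: leq_trans au _; exact: leqnSn).
  by rewrite [X in (_ < _ + X)%N]big_nat_recr //= su' eqxx addn1 addnS ltnS leq_addr.
exact: ltnW.
Qed.

Definition cnt T K X i := (\sum_(u < K * T)
  ((sched u == Some X) && (exec_index tau sched X u == i)))%N.

Lemma cnt_le T K X i : (tau X %| T)%N ->
  (cnt T K X i <= K * (T %/ tau X))%N.
Proof.
move=> dT.
have H (u : 'I_(K * T)) : (u %/ tau X < K * (T %/ tau X))%N.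
  by rewrite ltn_divLR // -mulnA divnK.
pose f (u : 'I_(K * T)) := Ordinal (H u).
pose A := [pred u : 'I_(K * T) |
  (sched u == Some X) && (exec_index tau sched X u == i)].
have -> : cnt T K X i = #|A|.
  rewrite /cnt -sum1_card [RHS]big_mkcond /=; apply: eq_bigr => u _; rewrite inE /=; by case: (_ && _).
apply: (leq_trans _ (eq_leq (card_ord (K * (T %/ tau X))))).
apply: (@leq_card_in _ _ f) => u v; rewrite !inE.
move=> /andP[/eqP su /eqP iu] /andP[/eqP sv /eqP iv] [] huv.
case: (ltngtP u v) => h.
- by have := idx_mono _ _ _ sv h huv; rewrite iu iv ltnn.
- by have := idx_mono _ _ _ su h (esym huv); rewrite iu iv ltnn.
- exact: val_inj.
Qed.

Lemma cnt_sum T K X : (\sum_(1 <= i < (tau X).+1) cnt T K X i)%N =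
  (\sum_(u < K * T) (sched u == Some X))%N.
Proof.
rewrite /cnt exchange_big /=; apply: eq_bigr => u _.
case: eqP => [su|_] /=; last by rewrite big1.
have hb : (1 <= exec_index tau sched X u < (tau X).+1)%N by rewrite ltnS; exact: idx_bounds _ _ su.
rewrite (eq_bigr (fun i => (exec_index tau sched X u == i) * 1)%N).
  exact: (@sumn_onehot _ _ _ (fun _ => 1%N) hb).
by move=> i _; rewrite muln1.
Qed.

Lemma cnt_total T K : (\sum_(X : S) \sum_(1 <= i < (tau X).+1) cnt T K X i <= K * T)%N.
Proof.
under eq_bigr do rewrite cnt_sum.
rewrite exchange_big /=.
apply: (leq_trans (n := \sum_(u < K * T) 1%N)); last by rewrite sum_nat_const card_ord muln1.
apply: leq_sum => u _.
case: (sched u) => [Y|]; last by rewrite big1.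
rewrite (bigD1 Y) //= eqxx big1 // => X; rewrite eq_sym => /negbTE.
by move=> h; rewrite (inj_eq (@Some_inj _)) h.
Qed.

Lemma total_cnt (R : realType) (r : S -> nat -> R) T K X :
  total_reward tau r sched X (K * T) =
  \sum_(1 <= i < (tau X).+1) (cnt T K X i)%:R * r X i.
Proof.
rewrite /total_reward /cnt.
have -> : \sum_(u < K * T) slot_reward tau r sched X u =
  \sum_(u < K * T) \sum_(1 <= i < (tau X).+1)
    ((sched u == Some X) && (exec_index tau sched X u == i))%:R * r X i.
  apply: eq_bigr => u _; rewrite /slot_reward.
  case: eqP => [su|_] /=; last by rewrite big1 // => i _; rewrite mul0r.
  have hb : (1 <= exec_index tau sched X u < (tau X).+1)%N by rewrite ltnS; exact: idx_bounds _ _ su.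
  by rewrite (@sumr_onehot _ _ _ _ (r X) hb).
rewrite exchange_big /=; apply: eq_bigr => i _.
by rewrite natr_sum mulr_suml.
Qed.

End Comb.
Arguments cnt {S}.


Lemma ae_witness d (Omega : measurableType d) (R : realType)
  (P : probability Omega R) (Q : Omega -> Prop) :
  {ae P, forall w, Q w} -> exists w, Q w.
Proof.
case=> A [mA PA0 sub].
apply: contrapT => hn.
have : (P setT <= P A)%E.
  apply: le_measure; rewrite ?inE //.
  move=> w _; apply: sub => /= Qw; apply: hn; exists w; exact: Qw.
by rewrite probability_setT PA0 lee_fin ler10.
Qed.

Lemma einf_ev (R : realType) (v : (\bar R)^nat) (a e : R) : 0 < e ->
  (a%:E <= limn_einf v)%E -> exists N, forall n, (N <= n)%N -> ((a - e)%:E <= v n)%E.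
Proof.
move=> e0; rewrite limn_einf_lim => hl.
have [[N hN]|hn] := pselect (exists N, ((a - e)%:E < einfs v N)%E).
  exists N => n Nn; apply: le_trans (ltW hN) _.
  by apply: ereal_inf_lbound; exists n.
have : (limn (einfs v) <= (a - e)%:E)%E.
  apply: lime_le; first exact: is_cvg_einfs.
  apply: nearW => N; rewrite leNgt; apply/negP => h; apply: hn; exists N; exact: h.
move=> /(le_trans hl); rewrite lee_fin => h; lra.
Qed.

Lemma cluster_closed (T : topologicalType) (F : set_system T) (C : set T) p :
  cluster F p -> closed C -> F C -> C p.
Proof.
rewrite clusterE => hp cC FC; rewrite ((closure_id C).1 cC).
exact: hp.
Qed.

Lemma cont_sum (R : realType) (Tt : topologicalType) (I : Type) (s : seq I)
  (G : I -> Tt -> R) :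
  (forall i, continuous (G i)) -> continuous (fun x => \sum_(i <- s) G i x).
Proof.
move=> hG; elim: s => [|a s IH].
  under eq_fun do rewrite big_nil.
  exact: cst_continuous.
under eq_fun do rewrite big_cons.
move=> x; apply: continuousD; [exact: hG | exact: IH].
Qed.


Section Det.
Import ArrowAsProduct.
Local Open Scope classical_set_scope.
Local Open Scope ring_scope.
Variables (R : realType) (S : finType) (tau : S -> nat) (r : S -> nat -> R)
  (qstar : S -> R).
Hypothesis tau_pos : forall X, (0 < tau X)%N.

Lemma det_main (sched : nat -> option S) :
  (forall X, ((qstar X)%:E <= avg_reward tau r sched X)%E) ->
  exists f : S -> nat -> R,
    [/\ (forall X, qstar X <= \sum_(1 <= i < (tau X).+1) f X i * r X i),
        (forall X i, (1 <= i <= tau X)%N ->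
           0 <= f X i /\ f X i <= (frame_len tau)%:R / (tau X)%:R) &
        \sum_(X : S) \sum_(1 <= i < (tau X).+1) f X i <= (frame_len tau)%:R].
Proof.
move=> hq.
set T := frame_len tau.
have T0 : (0 < T)%N.
  rewrite /T /frame_len; apply: (big_ind (fun x => 0 < x)%N) => //.
  all: try (by move=> m n m0 n0; rewrite lcmn_gt0 m0 n0).
  all: try (by move=> X _; exact: tau_pos).
have dT : forall X, (tau X %| T)%N.
  move=> X; rewrite /T /frame_len; exact: (biglcmn_sup X).
pose u (K : nat) : S * nat -> R := fun j => (cnt tau sched T K j.1 j.2)%:R / K%:R.
pose A := [set g : S * nat -> R | forall j, (`[0%R, (T %/ tau j.1)%:R]%classic : set R) (g j)]%classic.
have cA : compact A.
  have := (@tychonoff (S * nat)%type (fun _ => R) (fun j => `[0%R, (T %/ tau j.1)%:R]%classic) (fun j => @segment_compact R _ _)).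
  exact.
have FA : (u @ \oo) A.
  exists 0%N => // K _ j /=; rewrite in_itv /=; apply/andP; split.
    by rewrite divr_ge0.
  rewrite /u /=; have [->|K0] := posnP K; first by rewrite invr0 mulr0 ler0n.
  rewrite ler_pdivrMr ?ltr0n // -natrM ler_nat mulnC.
  exact: cnt_le.
have [g [Ag clg]] := cA _ _ FA.
pose hX (X : S) (g : S * nat -> R) := \sum_(1 <= i < (tau X).+1) g (X, i) * r X i.
pose h3 (g : S * nat -> R) := \sum_(X : S) \sum_(1 <= i < (tau X).+1) g (X, i).
have proj_c (j : S * nat) : continuous (fun g : S * nat -> R => g j).
  exact: (@proj_continuous _ (fun _ => R) j).
have contX X : continuous (hX X).
  apply: cont_sum => i x; apply: continuousM; first exact: proj_c.
  exact: cst_continuous.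
have cont3 : continuous h3.
  apply: cont_sum => X; apply: cont_sum => i; exact: proj_c.
have T0R : (T%:R : R) != 0 by rewrite pnatr_eq0 -lt0n.
have P1 X e : 0 < e -> qstar X - e <= hX X g.
  move=> e0.
  have [N hN] := @einf_ev _ _ _ _ e0 (hq X).
  have C : closed (hX X @^-1` [set x | qstar X - e <= x]).
    by apply: preimage_closed; [move=> x _; exact: contX | exact: closed_ge].
  suff : (hX X @^-1` [set x | qstar X - e <= x]) g by [].
  apply: (@cluster_closed _ _ _ _ clg C).
  exists N.+1 => // K /= hK.
  have hKT : (N <= K * T)%N.
    by apply: leq_trans (ltnW hK) _; rewrite leq_pmulr.
  have := hN _ hKT; rewrite lee_fin (@total_cnt _ _ _ tau_pos) -/T natrM mulfK //.
  rewrite /hX /u /= mulr_suml.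
  by under eq_bigr do rewrite mulrAC.
have P3 : h3 g <= T%:R.
  have C : closed (h3 @^-1` [set x | x <= T%:R]).
    by apply: preimage_closed; [move=> x _; exact: cont3 | exact: closed_le].
  suff : (h3 @^-1` [set x | x <= T%:R]) g by [].
  apply: (@cluster_closed _ _ _ _ clg C).
  exists 1%N => // K /= hK.
  have -> : h3 (u K) = (\sum_(X : S) \sum_(1 <= i < (tau X).+1)
      cnt tau sched T K X i)%:R / K%:R.
    rewrite natr_sum mulr_suml; apply: eq_bigr => X _.
    by rewrite natr_sum mulr_suml.
  rewrite ler_pdivrMr ?ltr0n // -natrM ler_nat mulnC.
  exact: cnt_total.
exists (fun X i => g (X, i)); split.
- move=> X; apply/ler_addgt0Pr => e e0.
  by rewrite -lerBlDr; exact: P1.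
- move=> X i _; have := Ag (X, i); rewrite /= in_itv /= => /andP[g0 g1].
  split => //; rewrite -natr_div ?dT // unitfE pnatr_eq0 -lt0n tau_pos //.
- exact P3.
Qed.
End Det.

Theorem lemma1 (R : realType) (S : finType) (tau : S -> nat)
    (r : S -> nat -> R) (qstar : S -> R)
    (tau_pos : forall X, (0 < tau X)%N)
    (r_noninc : forall X i, (1 <= i)%N -> (i < tau X)%N -> r X i.+1 <= r X i)
    (r_nonneg : forall X i, (1 <= i <= tau X)%N -> 0 <= r X i)
    (qstar_pos : forall X, 0 < qstar X) :
  feasible tau r qstar ->
  exists f : S -> nat -> R,
    [/\ (forall X, qstar X <= \sum_(1 <= i < (tau X).+1) f X i * r X i),
        (forall X i, (1 <= i <= tau X)%N ->
           0 <= f X i /\ f X i <= (frame_len tau)%:R / (tau X)%:R) &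
        \sum_(X : S) \sum_(1 <= i < (tau X).+1) f X i <= (frame_len tau)%:R].
Proof.
move=> [dd [Om [PP [sch hf]]]].
have [w hw] := @ae_witness _ _ _ _ _ hf.
exact: (@det_main _ _ _ _ _ tau_pos _ hw).
Qed.
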